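(* Let $n\ge 4$ and let $x$ be any vertex of the path $P_n$. Then there exists a $(P_n,x)$-well path 2-placement.
   Context: $P_n$ is the path on $n$ vertices; $dist$ is distance in $P_n$, $d(y)$ the degree of $y$ in $P_n$, $N(x)$ the set of neighbors of $x$. A permutation $\sigma$ of $V(P_n)$ is a 2-placement of $P_n$ if for every edge $ab$ of $P_n$, $\sigma(a)\sigma(b)$ is not an edge of $P_n$. $P_n^k$ is the $k$-th power of $P_n$; $\sigma(P_n)\subseteq P_n^k$ means $dist(\sigma(a),\sigma(b))\le k$ for every edge $ab$ of $P_n$. A fixed-point-free permutation $\sigma$ of $V(P_n)$ is a $(P_n,x)$-well path 2-placement if: (1) $\sigma$ is a 2-placement of $P_n$; (2) $\sigma(P_n)\subseteq P_n^6$; (3) $dist(x,\sigma(x))\le 2$; (4) $dist(y,\sigma(y))\le 3$ for every $y\in N(x)$ and for every $y$ with $d(y)=1$; (5) every cycle of $\sigma$ (in its disjoint cycle decomposition) has length at most $5$. *)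

(* Defs.v *)
From mathcomp Require Import all_boot all_fingroup.
Set Implicit Arguments. Unset Strict Implicit. Unset Printing Implicit Defensive.

(* Vertices of the path P_n are 0,...,n-1 ('I_n); edges join i and i+1. *)

Definition pdist (n : nat) (i j : 'I_n) : nat := (i - j) + (j - i).

Definition padj (n : nat) (i j : 'I_n) : bool := pdist i j == 1.

Definition pnbhd (n : nat) (x : 'I_n) : {set 'I_n} := [set y | padj x y].
Definition pdeg (n : nat) (y : 'I_n) : nat := #|pnbhd y|.

Definition two_placement (n : nat) (s : {perm 'I_n}) : Prop :=
  forall a b : 'I_n, padj a b -> ~~ padj (s a) (s b).

Definition in_power (n k : nat) (s : {perm 'I_n}) : Prop :=
  forall a b : 'I_n, padj a b -> pdist (s a) (s b) <= k.

Definition fixed_point_free (n : nat) (s : {perm 'I_n}) : Prop :=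
  forall y : 'I_n, s y != y.

Definition well_path_2_placement (n : nat) (x : 'I_n) (s : {perm 'I_n}) : Prop :=
  fixed_point_free s /\
  two_placement s /\
  in_power 6 s /\
  pdist x (s x) <= 2 /\
  (forall y : 'I_n, (y \in pnbhd x) || (pdeg y == 1) -> pdist y (s y) <= 3) /\
  (forall y : 'I_n, #|porbit s y| <= 5).

(* Main.v *)
Require Import Defs.
From mathcomp Require Import all_boot all_fingroup.
From mathcomp Require Import zify.

Definition nd (a b : nat) := (a - b) + (b - a).

Definition Wp n x (f : nat -> nat) :=
  (forall i, i < n -> f i < n) /\
  (forall i j, i < n -> j < n -> f i = f j -> i = j) /\
  (forall i, i < n -> f i != i) /\
  (forall i, i.+1 < n -> (nd (f i) (f i.+1) != 1) && (nd (f i) (f i.+1) <= 6)) /\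
  nd x (f x) <= 2 /\
  (forall y, y < n -> (nd x y == 1) || (y == 0) || (y == n.-1) -> nd y (f y) <= 3) /\
  (forall y, y < n -> exists2 m, 0 < m <= 5 & iter m f y = y).

Definition Sp n (f : nat -> nat) :=
  (forall i, i < n -> f i < n) /\
  (forall i j, i < n -> j < n -> f i = f j -> i = j) /\
  (forall i, i < n -> f i != i) /\
  (forall i, i.+1 < n -> (nd (f i) (f i.+1) != 1) && (nd (f i) (f i.+1) <= 6)) /\
  (forall i, i < n -> nd i (f i) <= 2) /\
  (forall y, y < n -> exists2 m, 0 < m <= 5 & iter m f y = y).

Definition wcheck n x (f : nat -> nat) :=
 [&& all (fun i => (f i < n) && (f i != i) && has (fun m => iter m f i == i) (iota 1 5)) (iota 0 n),
     all (fun i => all (fun j => (f i == f j) ==> (i == j)) (iota 0 n)) (iota 0 n),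
     all (fun i => (nd (f i) (f i.+1) != 1) && (nd (f i) (f i.+1) <= 6)) (iota 0 n.-1),
     nd x (f x) <= 2 &
     all (fun y => ((nd x y == 1) || (y == 0) || (y == n.-1)) ==> (nd y (f y) <= 3)) (iota 0 n)].

Definition scheck n (f : nat -> nat) :=
 [&& all (fun i => (f i < n) && (f i != i) && (nd i (f i) <= 2) && has (fun m => iter m f i == i) (iota 1 5)) (iota 0 n),
     all (fun i => all (fun j => (f i == f j) ==> (i == j)) (iota 0 n)) (iota 0 n) &
     all (fun i => (nd (f i) (f i.+1) != 1) && (nd (f i) (f i.+1) <= 6)) (iota 0 n.-1)].

Lemma memI n i : (i \in iota 0 n) = (i < n).
Proof. by rewrite mem_iota add0n. Qed.

Lemma iter_fix (f : nat -> nat) y : (exists2 k, k \in iota 1 5 & iter k f y == y) ->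
  exists2 k, 0 < k <= 5 & iter k f y = y.
Proof. case=> k; rewrite mem_iota => Hk /eqP E; exists k => //; lia. Qed.

Lemma wsound n x f : wcheck n x f -> Wp n x f.
Proof.
case/and5P=> /allP H1 /allP H2 /allP H3 H4 /allP H5.
split; [|split; [|split; [|split; [|split; [|split]]]]] => //.
- by move=> i; rewrite -(memI n i) =>  /H1 /andP[/andP[]].
- move=> i j Hi Hj E. have := H2 i; rewrite memI => /(_ Hi) /allP /(_ j).
  by rewrite memI => /(_ Hj); rewrite E eqxx => /eqP.
- by move=> i; rewrite -(memI n i) =>  /H1 /andP[/andP[]].
- move=> i Hi; apply: H3; rewrite memI; lia.
- move=> y Hy C; have := H5 y; rewrite memI => /(_ Hy); by rewrite C.
- move=> y; rewrite -(memI n y) =>  /H1 /andP[_ /hasP] [k Hk E].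
  apply: iter_fix => //; by exists k.
Qed.

Lemma ssound n f : scheck n f -> Sp n f.
Proof.
case/and3P=> /allP H1 /allP H2 /allP H3.
split; [|split; [|split; [|split; [|split]]]] => //.
- by move=> i; rewrite -(memI n i) =>  /H1 /andP[/andP[/andP[]]].
- move=> i j Hi Hj E. have := H2 i; rewrite memI => /(_ Hi) /allP /(_ j).
  by rewrite memI => /(_ Hj); rewrite E eqxx => /eqP.
- by move=> i; rewrite -(memI n i) =>  /H1 /andP[/andP[/andP[]]].
- move=> i Hi; apply: H3; rewrite memI; lia.
- by move=> i; rewrite -(memI n i) =>  /H1 /andP[/andP[/andP[]]].
- move=> y; rewrite -(memI n y) =>  /H1 /andP[_ /hasP] [k Hk E].
  apply: iter_fix => //; by exists k.
Qed.

Lemma S_W n x f : x < n -> Sp n f -> Wp n x f.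
Proof.
move=> Hx [A [B [C [E [D F]]]]].
split; [|split; [|split; [|split; [|split; [|split]]]]] => //.
- exact: D.
- move=> y Hy _; have := D y Hy; lia.
Qed.

Definition catf k (t g : nat -> nat) i := if i < k then t i else k + g (i - k).

Lemma iter_catL k t g m i : (forall j, j < k -> t j < k) -> i < k ->
  iter m (catf k t g) i = iter m t i.
Proof.
move=> Ht Hi; elim: m => //= m IH.
have Hl : iter m t i < k by elim: m {IH} => //= m IHm; apply: Ht.
by rewrite IH /catf Hl.
Qed.

Lemma iter_catR k t g m j : iter m (catf k t g) (k + j) = k + iter m g j.
Proof.
elim: m => //= m IH; rewrite IH /catf.
have -> : (k + iter m g j < k) = false by lia.
congr (_ + _); congr g; lia.
Qed.

Lemma S_cat k m t g : Sp k t -> Sp m g -> Sp (k + m) (catf k t g).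
Proof.
move=> [A [B [C [E [D F]]]]] [A' [B' [C' [E' [D' F']]]]].
split; [|split; [|split; [|split; [|split]]]].
- move=> i Hi; rewrite /catf; case: ifP => H.
    have := A i H; lia.
  have := A' (i - k); lia.
- move=> i j Hi Hj; rewrite /catf; case: ifP => H1; case: ifP => H2.
  + exact: B.
  + have := A i H1; lia.
  + have := A j H2; lia.
  + move=> Ef; have := B' (i - k) (j - k); lia.
- move=> i Hi; rewrite /catf; case: ifP => H.
    exact: C.
  have := C' (i - k) ltac:(lia); apply: contra => /eqP E1; apply/eqP; lia.
- move=> i Hi; rewrite /catf; case: ifP => H1; case: ifP => H2.
  + exact: E.
  + have Hk : i = k.-1 by lia.
    have Hm : 0 < m by lia.
    have a1 := A i H1; have c1 := C i H1; have d1 := D i H1.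
    have c2 := C' 0 Hm; have d2 := D' 0 Hm.
    have -> : i.+1 - k = 0 by lia.
    move: c1 c2 d1 d2 a1; rewrite /nd; move=> /eqP c1 /eqP c2 d1 d2 a1.
    apply/andP; split; [apply/eqP|]; lia.
  + lia.
  + have := E' (i - k) ltac:(lia); rewrite /nd; have -> : (i.+1 - k) = (i - k).+1 by lia.
    case/andP => /eqP e1 e2; apply/andP; split; [apply/eqP|]; lia.
- move=> i Hi; rewrite /catf; case: ifP => H.
    exact: D.
  have := D' (i - k) ltac:(lia); rewrite /nd; lia.
- move=> y Hy; case: (ltnP y k) => H.
    have [mm Hm Em] := F y H; exists mm => //; by rewrite iter_catL.
  have [mm Hm Em] := F' (y - k) ltac:(lia); exists mm => //.
  have -> : y = k + (y - k) by lia.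
  by rewrite iter_catR Em.
Qed.

Definition t4 := nth 0 [:: 1; 3; 0; 2].
Definition t5 := nth 0 [:: 1; 3; 0; 4; 2].

Lemma S4 : Sp 4 t4. Proof. by apply: ssound. Qed.
Lemma S5 : Sp 5 t5. Proof. by apply: ssound. Qed.

Lemma rep N : forall n, n <= N -> 4 <= n -> n != 6 -> n != 7 -> n != 11 -> exists f, Sp n f.
Proof.
elim: N => [|N IH] n Hn H4 H6 H7 H11; first lia.
case: (leqP n N) => HN; first exact: IH.
have [->|n4] := eqVneq n 4; first by exists t4; exact: S4.
have [->|n5] := eqVneq n 5; first by exists t5; exact: S5.
have [En|En] := boolP ((n == 10) || (n == 15)).
- have [g Hg] := IH (n - 5) ltac:(lia) ltac:(lia) ltac:(lia) ltac:(lia) ltac:(lia).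
  exists (catf 5 t5 g); have -> : n = 5 + (n - 5) by lia.
  exact: S_cat S5 Hg.
- have [g Hg] := IH (n - 4) ltac:(lia) ltac:(lia) ltac:(lia) ltac:(lia) ltac:(lia).
  exists (catf 4 t4 g); have -> : n = 4 + (n - 4) by lia.
  exact: S_cat S4 Hg.
Qed.

Definition tab6 x := nth 0 (if (x == 2) || (x == 3) then [:: 2; 4; 0; 5; 1; 3] else [:: 1; 3; 5; 0; 2; 4]).
Definition tab7 x := nth 0 (if x == 2 then [:: 1; 4; 0; 5; 2; 6; 3]
  else if x == 3 then [:: 1; 3; 5; 2; 6; 0; 4] else [:: 1; 3; 5; 0; 2; 6; 4]).
Definition tab11 x := nth 0 (if x == 6 then [:: 1; 3; 0; 2; 5; 8; 4; 9; 6; 10; 7]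
  else if x == 7 then [:: 1; 3; 0; 2; 5; 7; 9; 6; 10; 4; 8]
  else [:: 1; 3; 0; 2; 5; 7; 9; 4; 6; 10; 8]).

Lemma W6 : all (fun x => wcheck 6 x (tab6 x)) (iota 0 6). Proof. by []. Qed.
Lemma W7 : all (fun x => wcheck 7 x (tab7 x)) (iota 0 7). Proof. by []. Qed.
Lemma W11 : all (fun x => wcheck 11 x (tab11 x)) (iota 0 11). Proof. by vm_compute. Qed.

Lemma natW n x : 4 <= n -> x < n -> exists f, Wp n x f.
Proof.
move=> H4 Hx.
case: (boolP ((n == 6) || (n == 7) || (n == 11))).
- case/orP => [/orP[]|] /eqP En; subst n.
  + exists (tab6 x); apply: wsound; move/allP: W6; apply; by rewrite memI.
  + exists (tab7 x); apply: wsound; move/allP: W7; apply; by rewrite memI.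
  + exists (tab11 x); apply: wsound; move/allP: W11; apply; by rewrite memI.
- rewrite !negb_or => /andP[/andP[H6 H7] H11].
  have [f Hf] := @rep n n (leqnn n) H4 H6 H7 H11.
  by exists f; apply: S_W.
Qed.

Lemma pdeg1 n (y : 'I_n) : pdeg y == 1 -> (nat_of_ord y == 0) || (nat_of_ord y == n.-1).
Proof.
apply: contraTT; rewrite negb_or => /andP[H0 H1].
have Hy := ltn_ord y.
have Ha : (nat_of_ord y).-1 < n by lia.
have Hb : (nat_of_ord y).+1 < n by lia.
set a := Ordinal Ha; set b := Ordinal Hb.
have Hsub : [set a; b] \subset pnbhd y.
  apply/subsetP => z; rewrite !inE => /orP[] /eqP ->;
  rewrite /padj /pdist /a /b /=; apply/eqP; lia.
have := subset_leq_card Hsub; rewrite cards2.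
have -> : (a != b) = true by apply/eqP => /(congr1 val) /=; lia.
rewrite /pdeg => H2; apply/eqP => H3; by rewrite H3 in H2.
Qed.

Lemma W_perm n (x : 'I_n) f : Wp n x f -> exists s : {perm 'I_n}, well_path_2_placement x s.
Proof.
move=> [A [B [C [E [X [Y F]]]]]].
pose h (i : 'I_n) : 'I_n := Ordinal (A i (ltn_ord i)).
have hinj : injective h.
  move=> i j /(congr1 val) /= Eij; apply: val_inj; exact: (B _ _ (ltn_ord i) (ltn_ord j) Eij).
pose s := perm hinj.
have sE : forall i, nat_of_ord (s i) = f i by move=> i; rewrite permE.
have adjE : forall a b : 'I_n, padj a b -> (nat_of_ord b = (nat_of_ord a).+1) \/ (nat_of_ord a = (nat_of_ord b).+1).
  move=> a b; rewrite /padj /pdist => /eqP; lia.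
have ndC : forall a b, nd a b = nd b a by move=> a b; rewrite /nd addnC.
have Eab : forall a b : 'I_n, padj a b -> (nd (f a) (f b) != 1) && (nd (f a) (f b) <= 6).
  move=> a b /adjE [] Eq.
    rewrite Eq; apply: E; rewrite -Eq; exact: ltn_ord.
  rewrite ndC Eq; apply: E; rewrite -Eq; exact: ltn_ord.
exists s; split; [|split; [|split; [|split; [|split]]]].
- move=> y; apply/negP => /eqP /(congr1 (@nat_of_ord n)); rewrite sE; apply/eqP; exact: C.
- move=> a b Hab; rewrite /padj /pdist !sE; have := Eab a b Hab; by case/andP.
- move=> a b Hab; rewrite /pdist !sE; have := Eab a b Hab; by case/andP.
- rewrite /pdist sE; exact: X.
- move=> y Hy; rewrite /pdist sE; apply: Y => //.
  case/orP: Hy => [|/pdeg1 /orP[] ->]; last (by rewrite orbT); last by rewrite orbT.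
  by rewrite inE /padj /pdist => ->.
- move=> y; have [m Hm Em] := F y (ltn_ord y).
  have iterE : forall k, nat_of_ord (iter k s y) = iter k f (nat_of_ord y).
    by elim=> //= k IH; rewrite sE IH.
  have Hm' : iter m s y = y by apply: ord_inj; rewrite iterE.
  have Hq : forall q, iter (m * q) s y = y.
    elim=> [|q IH]; first by rewrite muln0.
    by rewrite mulnS iterD IH Hm'.
  have Hsub : porbit s y \subset [set iter (nat_of_ord i) s y | i : 'I_m].
    apply/subsetP => z /porbitP [i ->]; rewrite permX.
    have Hi : i %% m < m by rewrite ltn_mod; lia.
    apply/imsetP; exists (Ordinal Hi) => //=.
    by rewrite {1}(divn_eq i m) addnC iterD mulnC Hq.
  apply: leq_trans (subset_leq_card Hsub) _.
  apply: leq_trans (leq_imset_card _ _) _; rewrite card_ord; lia.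
Qed.

Theorem theorem3p1 (n : nat) (x : 'I_n) :
  4 <= n -> exists s : {perm 'I_n}, well_path_2_placement x s.
Proof.
move=> H4; have [f Hf] := @natW n x H4 (ltn_ord x).
exact: (@W_perm n x f Hf).
Qed.
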